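(* For every round $\ell\ge\lceil n/2\rceil$ of Algorithm 2 in which a tentative edge $e^{(\ell)}$ exists, the probability that $e^{(\ell)}$ is feasible, i.e. that the set of edges accepted before round $\ell$ together with $e^{(\ell)}$ is a matching, conditioned on $L^{\le\ell}$ and on $T^{\ge\ell+1}$, is at least $\frac{n/2-1}{\ell-1}$.
   Context: Submodular secretary matching setting. Let $G=(L\cup R,E)$ be a bipartite graph with $|L|=n$, and $v\colon 2^E\to\mathbb{R}_{\ge0}$ monotone and submodular. The vertices of $L$ arrive one per round in uniformly random order; on arrival of $u\in L$ its incident edges are revealed; $L^{\le\ell}$ denotes the set of vertices of $L$ arriving in rounds $1,\dots,\ell$. $\mathcal{A}$ is an offline algorithm that for every $L'\subseteq L$ returns a matching $\mathcal{A}(L'\cup R)$ of the subgraph induced by $L'\cup R$, depending only on the set $L'$. Algorithm 2: it rejects the vertices arriving in rounds $1,\dots,\lceil n/2\rceil-1$; in each round $\ell\ge\lceil n/2\rceil$ with arriving vertex $u$, it computes $M^{(\ell)}=\mathcal{A}(L^{\le\ell}\cup R)$, lets $e^{(\ell)}$ be the edge incident to $u$ in $M^{(\ell)}$ (the tentative edge; none if $u$ is unmatched), and if $e^{(\ell)}$ exists and the set of accepted edges together with $e^{(\ell)}$ is a matching, accepts $e^{(\ell)}$. $T^{\ge\ell}$ is the set of tentative edges of rounds $\ell,\dots,n$. *)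

(* Defs.v *)
From HB Require Import structures.
From mathcomp Require Import all_boot all_order all_algebra all_fingroup.
Set Implicit Arguments. Unset Strict Implicit. Unset Printing Implicit Defensive.

(* Vertices of L are 'I_n; R is a finite type; edges are pairs (u, r).
   A random arrival order is a permutation pi : {perm 'I_n}; the vertex
   arriving in round k+1 (paper's 1-indexed round) is pi k, for k : 'I_n. *)

Section Alg.
Variables (n : nat) (R : finType).
Variable A : {set 'I_n} -> {set 'I_n * R}.

Definition is_matching (M : {set 'I_n * R}) : bool :=
  [forall e in M, forall f in M, ((e.1 == f.1) || (e.2 == f.2)) ==> (e == f)].

(* L^{<= j}: vertices arriving in rounds 1..j. *)
Definition arrived (pi : {perm 'I_n}) (j : nat) : {set 'I_n} :=
  [set pi i | i : 'I_n & (i < j)%N].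

(* Tentative edge of (1-indexed) round k+1: the edge of
   M^{(k+1)} = A(L^{<= k+1}) incident to the vertex arriving in round k+1. *)
Definition tent (pi : {perm 'I_n}) (k : nat) : option ('I_n * R) :=
  [pick e in A (arrived pi k.+1) | e.1 \in [set pi i | i : 'I_n & val i == k]].

Fixpoint accepted (pi : {perm 'I_n}) (k : nat) : {set 'I_n * R} :=
  match k with
  | 0 => set0
  | k'.+1 =>
      let a := accepted pi k' in
      if (uphalf n <= k'.+1)%N then
        match tent pi k' with
        | Some e => if is_matching (e |: a) then e |: a else a
        | None => a
        end
      else a
  end.

(* T^{>= l+1} where round l has 0-based index i (l = i+1): tentative
   edges of rounds l+1..n, i.e. 0-based indices j with i < j < n. *)
Definition tent_after (pi : {perm 'I_n}) (i : nat) : {set 'I_n * R} :=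
  [set e | [exists j : 'I_n, (i < j)%N && (tent pi j == Some e)]].

(* e^{(l)} (0-based index i) exists and is feasible w.r.t. edges accepted
   before round l (i.e. in rounds 1..l-1 = 1..i). *)
Definition feasible (pi : {perm 'I_n}) (i : nat) : bool :=
  if tent pi i is Some e then is_matching (e |: accepted pi i) else false.

End Alg.

(* Main.v *)
Require Import Defs.
From HB Require Import structures.
From mathcomp Require Import all_boot all_order all_algebra all_fingroup.
From mathcomp Require Import zify.
Import Order.TTheory GRing.Theory Num.Theory.
Set Implicit Arguments. Unset Strict Implicit.

Section Aux.
Variables (n : nat) (R : finType) (A : {set 'I_n} -> {set 'I_n * R}).
Hypothesis hAS : forall S, {in A S, forall e, e.1 \in S}.
Hypothesis hAM : forall S, is_matching (A S).

Local Open Scope group_scope.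

Lemma matchingP (M : {set 'I_n * R}) :
  reflect (forall e f, e \in M -> f \in M -> (e.1 == f.1) || (e.2 == f.2) -> e = f)
          (is_matching M).
Proof.
apply: (iffP forall_inP) => [H e f eM fM ef|H e eM].
  by have /forall_inP/(_ f fM)/implyP/(_ ef)/eqP := H e eM.
by apply/forall_inP => f fM; apply/implyP => ef; apply/eqP; apply: H.
Qed.

Definition H (k : nat) : {set {perm 'I_n}} :=
  [set s : {perm 'I_n} | [forall j : 'I_n, (k <= j)%N ==> (s j == j)]].

Lemma inH (s : {perm 'I_n}) k : reflect (forall j : 'I_n, (k <= j)%N -> s j = j) (s \in H k).
Proof.
rewrite inE; apply: (iffP forallP) => [Hs j kj|Hs j].
  by have /implyP/(_ kj)/eqP := Hs j.
by apply/implyP => kj; rewrite Hs.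
Qed.

Lemma Hfix (s : {perm 'I_n}) k (j : 'I_n) : s \in H k -> (k <= j)%N -> s j = j.
Proof. by move/inH; apply. Qed.

Lemma H_lt (s : {perm 'I_n}) k j (x : 'I_n) : s \in H k -> (k <= j)%N -> (x < j)%N -> (s x < j)%N.
Proof.
move/inH=> Hs kj xj; case: (leqP k x) => kx; first by rewrite Hs.
case: (leqP k (s x)) => ksx; last by apply: leq_trans ksx kj.
have := Hs _ ksx => /perm_inj ex; by rewrite -ex ltnNge ksx in kx.
Qed.

Lemma H_inv (s : {perm 'I_n}) k : s \in H k -> s^-1 \in H k.
Proof.
move/inH=> Hs; apply/inH => j kj.
by rewrite -{1}(Hs j kj) permK.
Qed.

Lemma arrived_sub (s pi : {perm 'I_n}) k j : s \in H k -> (k <= j)%N ->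
  arrived (s * pi) j \subset arrived pi j.
Proof.
move=> sH kj; apply/subsetP => y /imsetP [x]; rewrite inE => xj ->.
rewrite permM; apply/imsetP; exists (s x) => //.
by rewrite inE; exact: H_lt sH kj xj.
Qed.

Lemma arrivedH (s pi : {perm 'I_n}) k j : s \in H k -> (k <= j)%N ->
  arrived (s * pi) j = arrived pi j.
Proof.
move=> sH kj; apply/eqP; rewrite eqEsubset (@arrived_sub s pi k j sH kj) /=.
have := @arrived_sub (s^-1) (s * pi) k j (H_inv sH) kj.
by rewrite mulgA mulVg mul1g.
Qed.

Lemma tentH (s pi : {perm 'I_n}) k m : s \in H k -> (k <= m)%N -> tent A (s * pi) m = tent A pi m.
Proof.
move=> sH km; rewrite /tent (@arrivedH s pi k m.+1 sH); last exact: leq_trans km _.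
have -> : [set (s * pi) i | i : 'I_n & val i == m] = [set pi i | i : 'I_n & val i == m].
  apply: eq_in_imset => x; rewrite inE => /eqP xm.
  by rewrite permM (inH _ _ sH) // xm.
by [].
Qed.

Lemma tentP (pi : {perm 'I_n}) m e : tent A pi m = Some e ->
  e \in A (arrived pi m.+1) /\ exists x : 'I_n, val x = m /\ e.1 = pi x.
Proof.
rewrite /tent; case: pickP => // f /andP [fA /imsetP [x]]; rewrite inE => /eqP xm f1 [<-].
by split => //; exists x.
Qed.

Lemma tent_lt (pi : {perm 'I_n}) m e : tent A pi m = Some e -> (m < n)%N.
Proof. move=> /tentP [_ [x [xm _]]]. rewrite -xm. exact: ltn_ord. Qed.

Definition bad (m : nat) (pi : {perm 'I_n}) (r : R) : bool :=
  (uphalf n <= m.+1)%N && (if tent A pi m is Some f then f.2 == r else false).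

Lemma badH (s pi : {perm 'I_n}) k m r : s \in H k -> (k <= m)%N -> bad m (s * pi) r = bad m pi r.
Proof. by move=> sH km; rewrite /bad (@tentH s pi k m sH km). Qed.

Definition good (k : nat) (pi : {perm 'I_n}) (r : R) : bool :=
  [forall m : 'I_n, (m < k)%N ==> ~~ bad m pi r].

Lemma acc_inv (pi : {perm 'I_n}) m : is_matching (accepted A pi m) /\
  forall f, f \in accepted A pi m -> exists m', [/\ (m' < m)%N, (uphalf n <= m'.+1)%N
      & tent A pi m' = Some f].
Proof.
elim: m => [|m [IHm IHf]] /=.
  by split; [apply/matchingP => e f; rewrite inE | move=> f; rewrite inE].
case: ifP => cm; last first.
  by split => // f /IHf [m' [m'm c' t']]; exists m'; split => //; apply: ltnW.
case et: (tent A pi m) => [e|]; last first.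
  by split => // f /IHf [m' [m'm c' t']]; exists m'; split => //; apply: ltnW.
case: ifP => em.
  split => // f; rewrite in_setU1 => /orP [/eqP ->|/IHf [m' [m'm c' t']]].
    by exists m.
  by exists m'; split => //; apply: ltnW.
by split => // f /IHf [m' [m'm c' t']]; exists m'; split => //; apply: ltnW.
Qed.

Lemma feasible_good (pi : {perm 'I_n}) (i : 'I_n) e : tent A pi i = Some e -> good i pi e.2 ->
  feasible A pi i.
Proof.
move=> et /forallP gd; rewrite /feasible et.
have [am af] := acc_inv pi i.
have [_ [x [xi e1]]] := tentP et.
have xi' : x = i by apply: val_inj.
rewrite xi' in e1.
have key : forall f, f \in accepted A pi i -> (e.1 != f.1) && (e.2 != f.2).
  move=> f /af [m' [m'i c' t']].
  have [_ [y [ym f1]]] := tentP t'.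
  have /implyP/(_ m'i) := gd (Ordinal (tent_lt t')).
  rewrite /bad /= c' t' /= => nb.
  rewrite [e.2 == _]eq_sym nb andbT e1 f1; apply/eqP => /perm_inj ey.
  by move: m'i; rewrite -ym ey ltnn.
apply/matchingP => a b; rewrite !in_setU1 => /orP [/eqP ->|aa] /orP [/eqP ->|ba] //.
- by have /andP [/negbTE -> /negbTE ->] := key _ ba.
- by rewrite [a.1 == _]eq_sym [a.2 == _]eq_sym; have /andP [/negbTE -> /negbTE ->] := key _ aa.
- by move/matchingP: am; apply.
Qed.

Lemma tpermH (t kk : 'I_n) : (t <= kk)%N -> tperm t kk \in H kk.+1.
Proof.
move=> tk; apply/inH => j kj; apply: tpermD; apply/eqP => e; move: kj; rewrite -e.
  by rewrite ltnNge tk.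
by rewrite ltnn.
Qed.

Lemma decomp (kk : 'I_n) (F : {perm 'I_n} -> nat) :
  \sum_(s in H kk.+1) F s =
  \sum_(t : 'I_n | (t <= kk)%N) \sum_(s in H kk) F (s * tperm t kk)%g.
Proof.
rewrite (partition_big (fun s : {perm 'I_n} => s kk) (fun t : 'I_n => (t <= kk)%N)); last first.
  by move=> s sH; have := H_lt sH (leqnn kk.+1) (ltnSn kk).
apply: eq_bigr => t tk.
have -> : \sum_(s in H kk.+1 | s kk == t) F s =
          \sum_(s in [set (s * tperm t kk)%g | s in H kk]) F s.
  apply: eq_bigl => s; apply/idP/idP.
    move=> /andP [sH /eqP skk]; apply/imsetP; exists (s * tperm t kk)%g.
      apply/inH => j kj; rewrite permM; case: (ltngtP kk j) => [kj'|jk|ejk].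
        rewrite (Hfix sH kj') tpermD //; apply/eqP => e; move: kj'; rewrite -e.
          by rewrite ltnNge tk.
        by rewrite ltnn.
      - by move: kj; rewrite leqNgt jk.
      have -> : j = kk by apply: val_inj.
      by rewrite skk tpermL.
    by rewrite -mulgA tperm2 mulg1.
  move=> /imsetP [s' s'H ->]; apply/andP; split.
    apply/inH => j kj; rewrite permM (Hfix s'H (ltnW kj)).
    exact: (Hfix (tpermH tk) kj).
  by rewrite permM (Hfix s'H (leqnn kk)) tpermR.
rewrite big_imset //= => x y _ _; apply: mulIg.
Qed.

Lemma goodS k (q : {perm 'I_n}) r : (k < n)%N ->
  good k.+1 q r = ~~ bad k q r && good k q r.
Proof.
move=> kn; apply/forallP/andP => [G|[nb /forallP G] m].
  split; first by have /implyP := G (Ordinal kn); apply.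
  by apply/forallP => m; apply/implyP => mk; have /implyP := G m; apply; apply: ltnW.
apply/implyP; rewrite ltnS leq_eqVlt => /orP [/eqP mk|mk].
  by have -> : m = Ordinal kn by apply: val_inj.
by have /implyP := G m; apply.
Qed.

Lemma bad_uniq (kk : 'I_n) (pi : {perm 'I_n}) r (t1 t2 : 'I_n) :
  (t1 <= kk)%N -> (t2 <= kk)%N ->
  bad kk (tperm t1 kk * pi) r -> bad kk (tperm t2 kk * pi) r -> t1 = t2.
Proof.
have key : forall t : 'I_n, (t <= kk)%N -> forall e, tent A (tperm t kk * pi) kk = Some e ->
    e \in A (arrived pi kk.+1) /\ e.1 = pi t.
  move=> t tk e /tentP [eA [x [xk e1]]].
  rewrite (@arrivedH _ pi kk.+1 kk.+1 (tpermH tk) (leqnn _)) in eA.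
  split => //; rewrite e1 permM.
  have -> : x = kk by apply: val_inj.
  by rewrite tpermR.
move=> t1k t2k; rewrite /bad.
case e1: (tent A _ kk) => [f1|]; last by rewrite andbF.
case e2: (tent A _ kk) => [f2|]; last by rewrite andbF.
move=> /andP [_ /eqP h1] /andP [_ /eqP h2].
have [f1A f11] := key _ t1k _ e1.
have [f2A f21] := key _ t2k _ e2.
have ef : f1 = f2.
  by move/matchingP: (hAM (arrived pi kk.+1)); apply => //; rewrite h1 h2 eqxx orbT.
apply: (@perm_inj _ pi).
by rewrite -f11 -f21 ef.
Qed.

Lemma count_le (kk : 'I_n) : \sum_(t : 'I_n | (t <= kk)%N) 1 = kk.+1.
Proof.
have h : \sum_(0 <= t < kk.+1) 1 = kk.+1 by rewrite sum_nat_const_nat subn0 muln1.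
rewrite (big_nat_widen _ _ n) in h; last exact: ltn_ord.
rewrite big_mkord in h; rewrite -[RHS]h; apply: eq_bigl => t //.
Qed.

Lemma ngood (kk : 'I_n) pi r :
  (kk <= \sum_(t : 'I_n | (t <= kk)%N) ~~ bad kk (tperm t kk * pi) r)%N.
Proof.
set b := fun t : 'I_n => bad kk (tperm t kk * pi) r.
have sp : \sum_(t : 'I_n | (t <= kk)%N) ~~ b t + \sum_(t : 'I_n | (t <= kk)%N) b t = kk.+1.
  rewrite -big_split /= -(count_le kk); apply: eq_bigr => t _; by case: (b t).
have le1 : (\sum_(t : 'I_n | (t <= kk)%N) b t <= 1)%N.
  have -> : \sum_(t : 'I_n | (t <= kk)%N) b t = \sum_(t : 'I_n | (t <= kk)%N && b t) 1.
    rewrite big_mkcondr /=; apply: eq_bigr => t _; by case: (b t).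
  rewrite sum1dep_card; apply/card_le1_eqP => x y; rewrite !inE => /andP [xk bx] /andP [yk bY].
  by rewrite (bad_uniq xk yk bx bY).
move: sp le1; set u := \sum_(_ | _) ~~ b _; set v := \sum_(_ | _) (b _ : nat). lia.
Qed.

Definition cnt k (pi : {perm 'I_n}) r := \sum_(s in H k) good k (s * pi)%g r.

Lemma cardHS (kk : 'I_n) : #|H kk.+1| = (kk.+1 * #|H kk|)%N.
Proof.
rewrite -!sum1_card (decomp kk (fun _ => 1%N)).
have -> : \sum_(t : 'I_n | (t <= kk)%N) \sum_(s in H kk) 1%N =
          \sum_(t : 'I_n | (t <= kk)%N) (1 * \sum_(s in H kk) 1%N)%N.
  by apply: eq_bigr => t _; rewrite mul1n.
by rewrite -big_distrl /= count_le.
Qed.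

Lemma claim k : (k <= n)%N -> forall pi r, (uphalf n - 1 <= k)%N ->
  ((uphalf n - 1) * #|H k| <= cnt k pi r * k)%N.
Proof.
elim: k => [|k IH] kn pi r ck.
  by have -> : (uphalf n - 1 = 0)%N by lia.
have kn' : (k < n)%N by [].
pose kk := Ordinal kn'.
case: (leqP (uphalf n) k.+1) => ck'; last first.
  have -> : cnt k.+1 pi r = #|H k.+1|.
    rewrite /cnt -sum1_card; apply: eq_bigr => s _.
    have -> : good k.+1 (s * pi)%g r = true; last by [].
    apply/forallP => m; apply/implyP => mk; rewrite /bad.
    have -> : (uphalf n <= m.+1)%N = false by apply/negbTE; rewrite -ltnNge; exact: leq_ltn_trans mk ck'.
    by [].
  by rewrite mulnC leq_mul2l ck orbT.
have ck2 : (uphalf n - 1 <= k)%N by lia.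
have IHt := fun t : 'I_n => IH (ltnW kn) (tperm t kk * pi)%g r ck2.
have step : cnt k.+1 pi r = \sum_(t : 'I_n | (t <= kk)%N)
    (~~ bad k (tperm t kk * pi)%g r * cnt k (tperm t kk * pi)%g r)%N.
  rewrite /cnt (decomp kk); apply: eq_bigr => t tk.
  have -> : \sum_(s in H kk) good k.+1 (s * tperm t kk * pi)%g r =
            \sum_(s in H kk) (~~ bad k (tperm t kk * pi)%g r && good k (s * (tperm t kk * pi))%g r).
    apply: eq_bigr => s sH; rewrite -mulgA goodS //.
    by rewrite (@badH s (tperm t kk * pi)%g k k r sH (leqnn k)).
  case: (~~ bad k (tperm t kk * pi)%g r) => /=; first by rewrite mul1n.
  by rewrite mul0n big1.
have hsuff : ((uphalf n - 1) * #|H k| <= cnt k.+1 pi r)%N.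
  case: (posnP k) => [k0|kpos].
    by have -> : (uphalf n - 1 = 0)%N by lia.
  rewrite -(leq_pmul2r kpos) step big_distrl /=.
  apply: (@leq_trans (\sum_(t : 'I_n | (t <= kk)%N) (~~ bad k (tperm t kk * pi)%g r) * ((uphalf n - 1) * #|H k|))%N).
    rewrite -big_distrl /= [X in (X <= _)%N]mulnC leq_mul2r; apply/orP; right.
    exact: (@ngood kk pi r).
  apply: leq_sum => t _; rewrite -mulnA leq_mul2l; apply/orP; right; exact: IHt.
rewrite (cardHS kk) /=.
rewrite mulnCA mulnC leq_mul2r; apply/orP; right; exact: hsuff.
Qed.

Lemma perpi (ii : 'I_n) (pi : {perm 'I_n}) : (uphalf n <= ii.+1)%N ->
  ((uphalf n - 1) * \sum_(s in H ii.+1) (tent A (s * pi)%g ii != None)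
    <= (\sum_(s in H ii.+1) feasible A (s * pi)%g ii) * ii)%N.
Proof.
move=> ci; rewrite !(decomp ii) big_distrr big_distrl /=; apply: leq_sum => t tk.
set q := (tperm t ii * pi)%g.
have e1 : \sum_(s in H ii) (tent A (s * tperm t ii * pi)%g ii != None) =
          \sum_(s in H ii) (tent A q ii != None).
  by apply: eq_bigr => s sH; rewrite -mulgA (@tentH s q ii ii sH (leqnn _)).
have e2 : \sum_(s in H ii) feasible A (s * tperm t ii * pi)%g ii =
          \sum_(s in H ii) feasible A (s * q)%g ii.
  by apply: eq_bigr => s sH; rewrite -mulgA.
rewrite e1 e2; case eq: (tent A q ii) => [e|]; last by rewrite big1 ?muln0.
rewrite /= sum1_card.
apply: (leq_trans (@claim ii (ltnW (ltn_ord ii)) q e.2 _)); first by lia.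
rewrite leq_mul2r; apply/orP; right; apply: leq_sum => s sH.
case g: (good ii (s * q)%g e.2) => //.
rewrite (@feasible_good (s * q)%g ii e) //.
by rewrite (@tentH s q ii ii sH (leqnn _)).
Qed.

End Aux.

Lemma sum_bool_card (T : finType) (X : {set T}) (P : pred T) :
  \sum_(x in X) (P x : nat) = #|[set x in X | P x]|.
Proof.
rewrite -sum1_card big_mkcond [RHS]big_mkcond /=; apply: eq_bigr => x _.
by rewrite !inE; case: (x \in X); case: (P x).
Qed.

Lemma double_count n (X : {set {perm 'I_n}}) (K : {set {perm 'I_n}}) (P : pred {perm 'I_n}) :
  (forall s pi, s \in K -> ((s * pi)%g \in X) = (pi \in X)) ->
  \sum_(pi in X) \sum_(s in K) (P (s * pi)%g : nat) = (#|K| * \sum_(pi in X) (P pi : nat))%N.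
Proof.
move=> inv; rewrite exchange_big /= -sum_nat_const; apply: eq_bigr => s sK.
rewrite [RHS](reindex_inj (mulgI s)) /=; apply: eq_bigl => pi; by rewrite inv.
Qed.

Local Open Scope ring_scope.

Theorem mainTheorem12 (n : nat) (R : finType)
  (E : {set 'I_n * R}) (A : {set 'I_n} -> {set 'I_n * R})
  (hAE : forall S, A S \subset E)
  (hAS : forall S, {in A S, forall e, e.1 \in S})
  (hAM : forall S, is_matching (A S))
  (i : 'I_n) (hi : (uphalf n <= i.+1)%N)
  (Sl : {set 'I_n}) (T : {set 'I_n * R}) :
  let cond := [set pi : {perm 'I_n} |
                 [&& arrived pi i.+1 == Sl, tent_after A pi i == T
                   & tent A pi i != None]] in
  (0 < #|cond|)%N ->
  ((n%:R / 2 - 1) / i%:R : rat)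
    <= #|[set pi in cond | feasible A pi i]|%:R / #|cond|%:R.
Proof.
move=> cond hpos.
pose cond0 := [set pi : {perm 'I_n} | (arrived pi i.+1 == Sl) && (tent_after A pi i == T)].
have inv : forall s pi, s \in H n i.+1 -> ((s * pi)%g \in cond0) = (pi \in cond0).
  move=> s pi sH; rewrite !inE (@arrivedH n s pi i.+1 i.+1 sH (leqnn _)).
  have -> : tent_after A (s * pi)%g i = tent_after A pi i; last by [].
  apply/setP => e; rewrite !inE; apply: eq_existsb => j.
  case: (ltnP i j) => ij /=; last by [].
  by rewrite (@tentH n R A s pi i.+1 j sH ij).
have eC : #|cond| = \sum_(pi in cond0) (tent A pi i != None : nat).
  rewrite sum_bool_card; apply: eq_card => pi; rewrite !inE; by case: (_ == Sl).
have eF : #|[set pi in cond | feasible A pi i]| = \sum_(pi in cond0) (feasible A pi i : nat).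
  rewrite sum_bool_card; apply: eq_card => pi; rewrite !inE.
  case fe: (feasible A pi i); last by rewrite !andbF.
  have -> : (tent A pi i != None) = true.
    by move: fe; rewrite /feasible; case: (tent A pi i).
  by rewrite !andbT.
have Hpos : (0 < #|H n i.+1|)%N.
  apply/card_gt0P; exists 1%g; apply/inH => j _; by rewrite perm1.
have key : ((uphalf n - 1) * #|cond| <= #|[set pi in cond | feasible A pi i]| * i)%N.
  have d1 := double_count (fun pi => tent A pi i != None) inv.
  have d2 := double_count (fun pi => feasible A pi i) inv.
  rewrite -(leq_pmul2l Hpos) eC eF mulnCA -d1 mulnA -d2.
  rewrite big_distrr big_distrl /=; apply: leq_sum => pi _.
  exact: (perpi hAM).
have hn : (n <= 2 * uphalf n)%N.
  have := odd_double_half n; rewrite uphalf_half -addnn; lia.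
have c1 : (1 <= uphalf n)%N by rewrite uphalf_half; have := ltn_ord i; have := odd_double_half n; lia.
case: (posnP i) => [i0|ipos].
  rewrite i0 invr0 mulr0; apply: divr_ge0; exact: ler0n.
have Cpos : (0 : rat) < #|cond|%:R by rewrite ltr0n.
have ipos' : (0 : rat) < i%:R by rewrite ltr0n.
rewrite ler_pdivrMr // mulrAC ler_pdivlMr //.
apply: (@le_trans _ _ ((uphalf n - 1)%:R * #|cond|%:R)).
  rewrite ler_wpM2r ?ler0n // natrB // lerBlDr subrK.
  rewrite ler_pdivrMr ?ltr0n // -natrM ler_nat mulnC; exact: hn.
by rewrite -!natrM ler_nat.
Qed.
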